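(* Let $k\ge2$ be an integer. If there exists an integer $\alpha\ge2$ such that $N_\alpha(k,k)<N_{\alpha+1}(k,k)$, then at least one of the following holds: (1) Letting $W_{k,\alpha}$ be the set of words over $\{1,\dots,\alpha+1\}$ of length $N_\alpha(k,k)$ that contain no factor which is a $k$-power or a $k$-anti-power, for every $w\in W_{k,\alpha}$ the two factors of $w$ of length $N_\alpha(k,k)-1$ each use exactly $\alpha+1$ distinct letters. (2) There exists a word $w$ over $\{1,\dots,\alpha\}$, containing no factor which is a $k$-power or a $k$-anti-power, of the form $$w=u_1(1u_1)^{k-1}x_1=u_2(2u_2)^{k-1}x_2=\cdots=u_\alpha(\alpha u_\alpha)^{k-1}x_\alpha,$$ where $x_1,\dots,x_\alpha,u_1,\dots,u_\alpha$ are finite words with $|u_1|<\cdots<|u_\alpha|$ and, for all $1\le i<j\le\alpha$, $$\gcd(|u_i|+1,|u_j|+1)\le\frac{|u_j|+1}{k-1}.$$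
   Context: A $k$-power is a word $u^k$ ($k$ concatenated copies of $u$) for a nonempty word $u$. A $k$-anti-power is a word $w=w_1\cdots w_k$ with $|w_1|=\cdots=|w_k|$ and $w_1,\dots,w_k$ pairwise distinct. $N_\alpha(k,k)$ is the smallest positive integer $N$ such that every word of length $N$ over an alphabet of size $\alpha$ contains a factor (contiguous subword) that is a $k$-power or a $k$-anti-power. In $(a u)^{k-1}$, $a$ denotes the single letter $a$. *)

(* Defs.v *)
(* Words are sequences of naturals; the alphabet {1,...,a}
   is imposed by the predicate word_over. *)
From mathcomp Require Import all_boot.
Set Implicit Arguments. Unset Strict Implicit. Unset Printing Implicit Defensive.

Definition word_over (a : nat) (w : seq nat) : bool :=
  all (fun c => (0 < c) && (c <= a)) w.

Definition kpower (k : nat) (w : seq nat) : Prop :=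
  exists u : seq nat, u != [::] /\ w = flatten (nseq k u).

Definition kantipower (k : nat) (w : seq nat) : Prop :=
  exists (bs : seq (seq nat)) (m : nat),
    size bs = k /\ all (fun b => size b == m) bs /\ uniq bs /\ w = flatten bs.

Definition avoids (k : nat) (w : seq nat) : Prop :=
  forall v : seq nat, infix v w -> ~ kpower k v /\ ~ kantipower k v.

Definition unavoidable_len (a k n : nat) : Prop :=
  forall w : seq nat, word_over a w -> size w = n -> ~ avoids k w.

Definition is_N (a k N : nat) : Prop :=
  0 < N /\ unavoidable_len a k N /\
  (forall M, 0 < M -> unavoidable_len a k M -> N <= M).

(* Main.v *)
Require Import Defs.
From mathcomp Require Import all_boot zify.
From Stdlib Require Import Classical.

Lemma flatten_nseqC (T : Type) n (s : seq T) :
  flatten (nseq n s) ++ s = s ++ flatten (nseq n s).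
Proof. by elim: n => [|n IH] /=; rewrite ?cats0 // -catA IH. Qed.

Lemma rev_flatten_nseq (T : Type) n (s : seq T) :
  rev (flatten (nseq n s)) = flatten (nseq n (rev s)).
Proof.
elim: n => [|n IH] //=. by rewrite rev_cat IH flatten_nseqC.
Qed.

Lemma map_flatten_nseq (T S : Type) (f : T -> S) n s :
  map f (flatten (nseq n s)) = flatten (nseq n (map f s)).
Proof. by elim: n => [|n IH] //=; rewrite map_cat IH. Qed.

Lemma avoids_rev k w : avoids k w -> avoids k (rev w).
Proof.
move=> Hw g Hg.
have Hg' : infix (rev g) w by rewrite infix_revLR.
have [H1 H2] := Hw _ Hg'.
split.
- move=> [u [Hu Hgu]]; apply: H1; exists (rev u); split.
    by case: u Hu Hgu => // a u' _ _; rewrite rev_cons; case: (rev u').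
  by rewrite Hgu rev_flatten_nseq.
- move=> [bs [m [Hs [Ha [Hu Hgu]]]]]; apply: H2.
  exists (rev (map rev bs)), m; split; first by rewrite size_rev size_map.
  split; first by rewrite all_rev all_map; apply/allP=> b Hb /=; rewrite size_rev; exact: (allP Ha).
  split.
  by rewrite rev_uniq (map_inj_uniq (can_inj (@revK nat))).
  by rewrite Hgu rev_flatten.
Qed.

Lemma avoids_map (f h : nat -> nat) k w :
  (forall x, x \in w -> h (f x) = x) -> avoids k w -> avoids k (map f w).
Proof.
move=> Hfh Hw g /infixP [s [s' Heq]].
have Hg : forall y, y \in g -> f (h y) = y.
  move=> y Hy. have : y \in map f w by rewrite Heq !mem_cat Hy orbT.
  by case/mapP=> x Hx ->; rewrite Hfh.
have Hmw : map h (map f w) = w.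
  by rewrite -map_comp; apply: map_id_in => x Hx /=; exact: Hfh.
have Hinf : infix (map h g) w.
  apply/infixP; exists (map h s), (map h s').
  by rewrite -!map_cat -Heq Hmw.
have [H1 H2] := Hw _ Hinf.
split.
- move=> [u [Hu Hgu]]; apply: H1; exists (map h u); split.
    by case: u Hu Hgu.
  by rewrite Hgu map_flatten_nseq.
- move=> [bs [m [Hs [Ha [Hu Hgb]]]]]; apply: H2.
  exists (map (map h) bs), m; split; first by rewrite size_map.
  split; first by rewrite all_map; apply/allP=> b Hb /=; rewrite size_map; exact: (allP Ha).
  split; last by rewrite Hgb map_flatten; congr flatten; apply: eq_map.
  rewrite (map_inj_in_uniq (s:=bs)) // => b1 b2 Hb1 Hb2 E.
  have K : forall b, b \in bs -> map f (map h b) = b.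
    move=> b Hb; rewrite -map_comp; apply: map_id_in => y Hy /=; apply: Hg.
    rewrite Hgb; apply/flattenP; by exists b.
  by rewrite -(K _ Hb1) -(K _ Hb2) E.
Qed.
Lemma nth_period (t : nat) u n x s : s < n ->
  nth 0 (u ++ flatten (nseq n (t :: u)) ++ x) (size u + s * (size u).+1) = t.
Proof.
rewrite nth_cat ifF; last by apply/negbTE; rewrite -leqNgt leq_addr.
rewrite addKn.
elim: n s => [|n IH] [|s] //= Hs.
rewrite -catA nth_cat /= ifF; last by apply/negbTE; rewrite -leqNgt; lia.
have -> : (size u + s * (size u).+1)%coq_nat - size u = s * (size u).+1 by lia.
exact: IH.
Qed.

Lemma gcd_part k (v : seq nat) t1 t2 m1 m2 : 2 <= k -> m1 < m2 -> t1 != t2 ->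
  (forall s, s < k.-1 -> nth 0 v (m1 + s * m1.+1) = t1) ->
  (forall s, s < k.-1 -> nth 0 v (m2 + s * m2.+1) = t2) ->
  gcdn m1.+1 m2.+1 * k.-1 <= m2.+1.
Proof.
move=> Hk Hm Ht H1 H2.
set d := gcdn m1.+1 m2.+1.
have d0 : 0 < d by rewrite gcdn_gt0.
have Ep : m1.+1 = (m1.+1 %/ d) * d by rewrite divnK // dvdn_gcdl.
have Eq : m2.+1 = (m2.+1 %/ d) * d by rewrite divnK // dvdn_gcdr.
set p' := m1.+1 %/ d in Ep. set q' := m2.+1 %/ d in Eq.
rewrite leqNgt; apply/negP => Hlt.
have q'lt : q' < k.-1.
  have : q' * d < d * k.-1 by rewrite -Eq.
  by rewrite mulnC ltn_pmul2l.
have p'q' : p' < q'.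
  have : p' * d < q' * d by rewrite -Ep -Eq.
  by rewrite ltn_pmul2r.
have p'0 : 0 < p' by rewrite lt0n; apply/eqP => E; move: Ep; rewrite E.
have A := H1 q'.-1 (leq_ltn_trans (leq_pred _) q'lt).
have B := H2 p'.-1 (ltn_trans (leq_ltn_trans (leq_pred _) p'q') q'lt).
move/eqP: Ht; apply; rewrite -A -B; congr nth.
rewrite [m1.+1]Ep [m2.+1]Eq.
have E1 : m1 = p' * d - 1 by lia.
have E2 : m2 = q' * d - 1 by lia.
rewrite E1 E2.
have q'0 : 0 < q' by lia.
nia.
Qed.

Lemma fin_choice (A : Type) (a0 : A) (T : seq nat) (P : nat -> A -> Prop) :
  (forall t, t \in T -> exists a, P t a) ->
  exists g : nat -> A, forall t, t \in T -> P t (g t).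
Proof.
elim: T => [|b T IH] H; first by exists (fun _ => a0).
have [g Hg] : exists g : nat -> A, forall t, t \in T -> P t (g t).
  by apply: IH => t Ht; apply: H; rewrite inE Ht orbT.
have [a Ha] := H b (mem_head _ _).
exists (fun t => if t == b then a else g t) => t.
rewrite inE; case: eqP => [-> //|_ /= Ht]; exact: Hg.
Qed.

Lemma le_sumn x s : x \in s -> x <= sumn s.
Proof.
elim: s => [//|y s IH] /=; rewrite inE => /orP [/eqP ->|H]; first exact: leq_addr.
apply: leq_trans (IH H) _; exact: leq_addl.
Qed.

Lemma relabel (T : seq nat) a k w : size T <= a -> {subset w <= T} -> avoids k w ->
  word_over a (map (fun x => (index x T).+1) w) /\
  avoids k (map (fun x => (index x T).+1) w).
Proof.
move=> HT Hsub Hw; split.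
- apply/allP => y /mapP [x Hx ->] /=.
  have H : index x T < size T by rewrite index_mem Hsub.
  lia.
- apply: (@avoids_map _ (fun y => nth 0 T y.-1)) => // x Hx /=.
  exact: nth_index (Hsub _ Hx).
Qed.

Definition Concl k alpha :=
  exists (w : seq nat) (u x : nat -> seq nat),
     word_over alpha w /\ avoids k w /\
     (forall i, 1 <= i <= alpha ->
        w = u i ++ flatten (nseq k.-1 (i :: u i)) ++ x i) /\
     (forall i j, 1 <= i -> i < j -> j <= alpha ->
        size (u i) < size (u j) /\
        gcdn (size (u i)).+1 (size (u j)).+1 * k.-1 <= (size (u j)).+1).

Lemma main k a N w : 2 <= k -> is_N a k N -> word_over a.+1 w -> size w = N ->
  avoids k w -> size (undup (drop 1 w)) <= a -> Concl k a.
Proof.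
move=> Hk [N0 [UN _]] Hwo Hsz Hw Hund.
case: w Hwo Hsz Hw Hund => [|c v] Hwo Hsz Hw Hund; first by rewrite -Hsz in N0.
rewrite /= drop0 in Hund.
have Hv : avoids k v := fun g Hg => Hw g (infix_trans Hg (infix_cons v c)).
have Hcv : c \notin v.
  apply/negP => Hc.
  have R1 : size (undup (c::v)) <= a by rewrite /= Hc.
  have R2 : {subset c::v <= undup (c::v)} by move=> y; rewrite mem_undup.
  have [Ho Ha] := @relabel (undup (c::v)) a k (c::v) R1 R2 Hw.
  by apply: (UN _ Ho _ Ha); rewrite size_map.
set S := undup v. set M := c + sumn v.
set T := S ++ iota M.+1 (a - size S).
have HsT : size T = a by rewrite size_cat size_iota subnKC.
have HuT : uniq T.
  rewrite cat_uniq undup_uniq iota_uniq andbT /=.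
  apply/hasPn => y; rewrite mem_iota => /andP [Hy _].
  rewrite /= mem_undup; apply/negP => Hyv; have := @le_sumn y v Hyv; rewrite /M in Hy; lia.
have HcT : c \notin T.
  rewrite mem_cat mem_undup (negbTE Hcv) /= mem_iota; apply/negP; case/andP => H _; rewrite /M in H; lia.
have HvT : {subset v <= T} by move=> y Hy; rewrite mem_cat mem_undup Hy.
have Hper : forall t, t \in T -> exists p : seq nat * seq nat,
    v = p.1 ++ flatten (nseq k.-1 (t :: p.1)) ++ p.2.
  move=> t Ht.
  have NA : ~ avoids k (t :: v).
    move=> A.
    have R1 : size T <= a by rewrite HsT.
    have R2 : {subset t::v <= T}.
      by move=> y; rewrite inE => /orP [/eqP -> //|]; exact: HvT.
    have [Ho Ha] := @relabel T a k (t::v) R1 R2 A.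
    by apply: (UN _ Ho _ Ha); rewrite size_map -Hsz.
  have [g [Hg HP]] : exists g, infix g (t::v) /\ (kpower k g \/ kantipower k g).
    apply: NNPP => H; apply: NA => g Hg; split => P; apply: H; exists g; tauto.
  move: Hg; rewrite infix_consl => /orP [/prefixP [s2 Hs2] | Hg]; last first.
    by have := Hv g Hg; tauto.
  have [k' Ek] : exists k', k = k'.+2 by exists (k-2); lia.
  case: HP => [[y [Hy Hgy]] | [bs [m [Hs [Ha [Hu Hgb]]]]]].
  + case: y Hy Hgy => [//|b u] _ Hgy.
    move: Hs2; rewrite Hgy Ek /= -catA => [[-> ->]].
    by exists (u, s2).
  + exfalso.
    rewrite Ek in Hs.
    case: bs Hs Ha Hu Hgb => [|b0 [|b1 bs'']] //= Hs Ha Hu Hgb.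
    case: b0 Ha Hu Hgb => [|b r] Ha Hu Hgb.
      case: b1 Ha Hu Hgb => [|b1' r1] Ha Hu Hgb; first by rewrite inE eqxx in Hu.
      by move: Ha => /= /andP [/eqP <-].
    move: Hs2; rewrite Hgb /= => [[Etb Ev]].
    apply: (proj2 (Hw (flatten ((c::r) :: b1 :: bs'')) _)).
      apply: prefixW; apply/prefixP; exists s2; by rewrite Ev /= -!catA.
    exists ((c::r) :: b1 :: bs''), m; split; first by rewrite Ek.
    split; first by move: Ha.
    split; last by [].
    rewrite /=; apply/andP; split; last by case/andP: Hu.
    apply/negP => Hin; apply: (negP Hcv).
    have Hf : c \in flatten (b1 :: bs'').
      by apply/flattenP; exists (c::r); [exact: Hin | exact: mem_head].
    move: Hf; rewrite Ev /= !mem_cat => /orP [->|->]; by rewrite ?orbT.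
have [g Hg] := @fin_choice (seq nat * seq nat) ([::],[::]) T _ Hper.
set m := fun t => size (g t).1.
have Hnth : forall t s, t \in T -> s < k.-1 -> nth 0 v (m t + s * (m t).+1) = t.
  by move=> t s Ht Hs; rewrite {1}(Hg t Ht); exact: nth_period.
have Hinj : {in T &, injective m}.
  move=> t1 t2 H1 H2 E.
  have k1 : 0 < k.-1 by lia.
  by rewrite -(Hnth t1 0 H1 k1) -(Hnth t2 0 H2 k1) E.
set T' := sort (fun x y => m x <= m y) T.
have Hperm : perm_eq T' T by rewrite perm_sort.
have HmT' : T' =i T := perm_mem Hperm.
have HuT' : uniq T' by rewrite (perm_uniq Hperm).
have HsT' : size T' = a by rewrite (perm_size Hperm).
have Hsort : sorted (fun x y => m x <= m y) T'.
  by apply: sort_sorted => x y; exact: leq_total.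
set sig := fun x => (index x T').+1.
exists (map sig v), (fun i => map sig (g (nth 0 T' i.-1)).1),
  (fun i => map sig (g (nth 0 T' i.-1)).2).
have R1 : size T' <= a by rewrite HsT'.
have R2 : {subset v <= T'} by move=> y Hy; rewrite HmT'; exact: HvT.
have [Ho Ha] := @relabel T' a k v R1 R2 Hv.
split; first exact Ho. split; first exact Ha. split.
- move=> i /andP [i1 ia].
  set t := nth 0 T' i.-1.
  have Hi : i.-1 < size T' by rewrite HsT'; lia.
  have HtT' : t \in T' by apply: mem_nth.
  have Hsig : sig t = i by rewrite /sig /t index_uniq //; lia.
  have HtT : t \in T by rewrite -HmT'.
  by rewrite {1}(Hg t HtT) !map_cat map_flatten_nseq /= Hsig.
- move=> i j i1 ij ja; rewrite !size_map.
  set t1 := nth 0 T' i.-1; set t2 := nth 0 T' j.-1.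
  have Hi : i.-1 < size T' by rewrite HsT'; lia.
  have Hj : j.-1 < size T' by rewrite HsT'; lia.
  have H1 : t1 \in T by rewrite -HmT'; apply: mem_nth.
  have H2 : t2 \in T by rewrite -HmT'; apply: mem_nth.
  have ne : t1 != t2 by rewrite /t1 /t2 nth_uniq //; lia.
  have le : m t1 <= m t2.
    apply: (sorted_ltn_nth (leT := fun x y => m x <= m y)) => //; last by lia.
    by move=> y x z; exact: leq_trans.
  have lt : m t1 < m t2.
    rewrite ltn_neqAle le andbT; apply: contra_neq ne; exact: Hinj.
  split; first exact: lt.
  apply: (@gcd_part k v t1 t2) => // s Hs; exact: Hnth.
Qed.

Lemma undup_bound b w s : word_over b w -> {subset s <= w} -> size (undup s) <= b.
Proof.
move=> Hw Hsub.
suff : size (undup s) <= size (iota 1 b) by rewrite size_iota.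
apply: uniq_leq_size (undup_uniq s) _ => y.
rewrite mem_undup => /Hsub Hy; have := allP Hw y Hy => /andP [H1 H2].
by rewrite mem_iota H1 /= add1n ltnS.
Qed.

Lemma size_undup_rev (s : seq nat) : size (undup (rev s)) = size (undup s).
Proof.
apply: perm_size; apply: uniq_perm; rewrite ?undup_uniq // => y.
by rewrite !mem_undup mem_rev.
Qed.

Theorem lemma5p2 (k alpha Na Na1 : nat) :
  2 <= k -> 2 <= alpha ->
  is_N alpha k Na -> is_N alpha.+1 k Na1 -> Na < Na1 ->
  (forall w : seq nat, word_over alpha.+1 w -> size w = Na -> avoids k w ->
     size (undup (take Na.-1 w)) = alpha.+1 /\
     size (undup (drop 1 w)) = alpha.+1)
  \/
  (exists (w : seq nat) (u x : nat -> seq nat),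
     word_over alpha w /\ avoids k w /\
     (forall i, 1 <= i <= alpha ->
        w = u i ++ flatten (nseq k.-1 (i :: u i)) ++ x i) /\
     (forall i j, 1 <= i -> i < j -> j <= alpha ->
        size (u i) < size (u j) /\
        gcdn (size (u i)).+1 (size (u j)).+1 * k.-1 <= (size (u j)).+1)).
Proof.
move=> Hk Ha HN HN1 Hlt.
case: (classic (exists w, word_over alpha.+1 w /\ size w = Na /\ avoids k w /\
   ~ (size (undup (take Na.-1 w)) = alpha.+1 /\ size (undup (drop 1 w)) = alpha.+1)))
  => [[w [Hwo [Hs [Hw Hn]]]] | Hno]; last first.
  left => w Hwo Hs Hw; apply: NNPP => H; apply: Hno; exists w; tauto.
right.
have B1 : size (undup (take Na.-1 w)) <= alpha.+1.
  by apply: (@undup_bound alpha.+1 w _ Hwo) => y; exact: mem_take.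
have B2 : size (undup (drop 1 w)) <= alpha.+1.
  by apply: (@undup_bound alpha.+1 w _ Hwo) => y; exact: mem_drop.
case: (eqVneq (size (undup (drop 1 w))) alpha.+1) => Hd.
- have Ht : size (undup (take Na.-1 w)) != alpha.+1.
    by apply/eqP => E; apply: Hn; split => //; apply/eqP.
  have N0 : 0 < Na by case: HN.
  apply: (@main k alpha Na (rev w) Hk HN).
  + by rewrite /word_over all_rev.
  + by rewrite size_rev.
  + exact: avoids_rev.
  + have -> : drop 1 (rev w) = rev (take Na.-1 w).
      rewrite -{1}(cat_take_drop Na.-1 w) rev_cat drop_size_cat //.
      by rewrite size_rev size_drop Hs; lia.
    rewrite size_undup_rev; lia.
- apply: (@main k alpha Na w Hk HN Hwo Hs Hw); lia.
Qed.
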